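(* Let $t>0$ be such that $I(t)$ has nonempty interior, $I(t)=[l(t),r(t)]$ with $l(t)<r(t)$. Then: (1) $F(x,t)=G(x,t)=0$ for all $x\in I(t)$; (2) $\tau_*(x,t)=\tau^*(x,t)=0$ for $x\in(l(t),r(t)]$, and $\tau_*(l(t),t)=0$; (3) $y_*(x,t)=y^*(x,t)=0$ for $x\in[l(t),r(t))$, and $y_*(r(t),t)=0$; (4) for all $0<t'<t$, $I(t')$ has nonempty interior; (5) the set $\{(x,t'):0\le t'\le t,\ x\in I(t')\}$ is star-shaped with respect to $(0,0)$.
   Context: Standing assumptions: $u_0,u_b:[0,\infty)\to\mathbb{R}$ bounded measurable with $u_b>0$; $\rho_0,\rho_b:[0,\infty)\to(0,\infty)$ positive locally bounded measurable. For $x,t,y,\tau\ge0$: $F(y,x,t)=\int_0^y[tu_0(\eta)+\eta-x]\rho_0(\eta)\,d\eta$, $G(\tau,x,t)=\int_0^\tau[x-u_b(\eta)(t-\eta)]\rho_b(\eta)u_b(\eta)\,d\eta$, $F(x,t)=\min_{y\ge0}F(y,x,t)$, $G(x,t)=\min_{\tau\ge0}G(\tau,x,t)$ (minima attained); $y_*\le y^*$ smallest/largest minimizers of $F(\cdot,x,t)$, $\tau_*\le\tau^*$ those of $G(\cdot,x,t)$. For fixed $t$, $F(\cdot,t)$ is decreasing and $G(\cdot,t)$ increasing in $x$, so $I(t)=\{x\ge0:F(x,t)=G(x,t)\}$ is a closed (possibly empty or one-point) interval, written $[l(t),r(t)]$ when nonempty. *)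

(* Defs.v *)
From HB Require Import structures.
From mathcomp Require Import all_boot all_order all_algebra.
From mathcomp Require Import all_classical all_reals all_analysis.
Set Implicit Arguments. Unset Strict Implicit. Unset Printing Implicit Defensive.
Import Order.TTheory GRing.Theory Num.Theory.
Import numFieldNormedType.Exports.
Local Open Scope classical_set_scope.
Local Open Scope ring_scope.

Section Defs.
Variable R : realType.
Let mu := (@lebesgue_measure R).

Definition halfline : set R := [set z | 0 <= z].

Definition Fyxt (u0 rho0 : R -> R) (y x t : R) : R :=
  Rintegral mu `[0, y] (fun eta => (t * u0 eta + eta - x) * rho0 eta).

Definition Gtxt (ub rhob : R -> R) (tau x t : R) : R :=
  Rintegral mu `[0, tau] (fun eta => (x - ub eta * (t - eta)) * rhob eta * ub eta).

(* F(x,t) = min_{y >= 0} F(y,x,t), G(x,t) = min_{tau >= 0} G(tau,x,t)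
   (the minima are attained, so the infimum is the minimum) *)
Definition Fxt u0 rho0 (x t : R) : R := inf [set Fyxt u0 rho0 y x t | y in halfline].
Definition Gxt ub rhob (x t : R) : R := inf [set Gtxt ub rhob tau x t | tau in halfline].

Definition Fargmin u0 rho0 (x t : R) : set R :=
  [set y | 0 <= y /\ Fyxt u0 rho0 y x t = Fxt u0 rho0 x t].
Definition Gargmin ub rhob (x t : R) : set R :=
  [set tau | 0 <= tau /\ Gtxt ub rhob tau x t = Gxt ub rhob x t].

Definition y_low u0 rho0 x t : R := inf (Fargmin u0 rho0 x t).
Definition y_up u0 rho0 x t : R := sup (Fargmin u0 rho0 x t).
Definition tau_low ub rhob x t : R := inf (Gargmin ub rhob x t).
Definition tau_up ub rhob x t : R := sup (Gargmin ub rhob x t).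

Definition Iset u0 rho0 ub rhob (t : R) : set R :=
  [set x | 0 <= x /\ Fxt u0 rho0 x t = Gxt ub rhob x t].

End Defs.

(* Main.v *)
Require Import Defs.
From HB Require Import structures.
From mathcomp Require Import all_boot all_order all_algebra.
From mathcomp Require Import all_classical all_reals all_analysis.
Import Order.TTheory GRing.Theory Num.Theory.
Import numFieldNormedType.Exports.
Local Open Scope classical_set_scope.
Local Open Scope ring_scope.

Set Implicit Arguments.
Section Aux.
Variable R : realType.
Local Notation mu := (@lebesgue_measure R).

Definition good (f : R -> R) := measurable_fun (@halfline R) f /\
  forall c, exists M, forall z, 0 <= z <= c -> `|f z| <= M.

Lemma mhalf : measurable (@halfline R).
Proof.
rewrite (_ : @halfline R = `[0%R, +oo[%classic); first exact: measurable_itv.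
by apply/seteqP; split => z; rewrite /= in_itv /= andbT.
Qed.

Lemma sub0y (y : R) : `[0, y]%classic `<=` @halfline R.
Proof. by move=> z /=; rewrite in_itv /= => /andP[]. Qed.

Lemma good_int f y : good f -> mu.-integrable `[0, y] (EFin \o f).
Proof.
move=> [mf bf]; apply: measurable_bounded_integrable => //.
- by have := lebesgue_measure_itv `[0, y]; rewrite /= => ->; case: ifP => _ //=; rewrite ?ltry.
- by apply: measurable_funS mf; [exact: mhalf | exact: sub0y].
- have [M hM] := bf y; exists M; split; first by rewrite num_real.
  move=> N MN z /=; rewrite in_itv /= => hz; apply: le_trans (hM _ hz) _.
  exact: ltW.
Qed.


Lemma goodD f g : good f -> good g -> good (fun z => f z + g z).
Proof.
move=> [mf bf] [mg bg]; split; first exact: measurable_realfun.measurable_funD.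
move=> c; have [M hM] := bf c; have [N hN] := bg c; exists (M + N) => z hz.
by apply: le_trans (ler_normD _ _) _; apply: lerD; [exact: hM|exact: hN].
Qed.

Lemma goodM f g : good f -> good g -> good (fun z => f z * g z).
Proof.
move=> [mf bf] [mg bg]; split; first exact: measurable_realfun.measurable_funM.
move=> c; have [M hM] := bf c; have [N hN] := bg c; exists (M * N) => z hz.
by rewrite normrM; apply: ler_pM => //; [exact: hM|exact: hN].
Qed.

Lemma goodC c : good (fun _ => c).
Proof. by split; [exact: measurable_cst | move=> d; exists `|c|]. Qed.

Lemma goodid : good (fun z => z).
Proof.
split; first exact: measurable_id.
move=> c; exists `|c| => z /andP[z0 zc]; rewrite !ger0_norm //.
exact: le_trans zc.
Qed.

Lemma goodN f : good f -> good (fun z => `|f z|).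
Proof.
move=> [mf bf]; split; first exact: measurableT_comp mf.
by move=> c; have [M hM] := bf c; exists M => z hz; rewrite normr_id; exact: hM.
Qed.

Lemma goodB f g : good f -> good g -> good (fun z => f z - g z).
Proof.
move=> hf hg; have := goodD hf (goodM (goodC (-1)) hg).
by congr good; apply: funext => z; rewrite mulN1r.
Qed.


Definition RI (f : R -> R) (y : R) := Rintegral mu `[0, y] f.

Lemma RI0 f : RI f 0 = 0.
Proof. by rewrite /RI set_itv1 Rintegral_set1. Qed.

Lemma RI_ge0 f y : (forall z, 0 <= z <= y -> 0 <= f z) -> 0 <= RI f y.
Proof. by move=> h; apply: Rintegral_ge0 => z /=; rewrite in_itv /=; exact: h. Qed.

Lemma RI_split f a y : good f -> 0 <= a <= y ->
  RI f y = RI f a + Rintegral mu `]a, y] f.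
Proof.
move=> gf /andP[a0 ay]; rewrite -(Rintegral_itvB (good_int y gf)) ?bnd_simp //.
by rewrite /RI addrC subrK.
Qed.

Lemma RI_mono f a y : good f -> 0 <= a <= y ->
  (forall z, a < z <= y -> 0 <= f z) -> RI f a <= RI f y.
Proof.
move=> gf hay h; rewrite (@RI_split f a y gf hay) lerDl.
by apply: Rintegral_ge0 => z /=; rewrite in_itv /=; exact: h.
Qed.

Lemma RI_lb f a : good f -> 0 <= a -> (forall z, a <= z -> 0 <= f z) ->
  forall y, 0 <= y -> - RI (fun z => `|f z|) a <= RI f y.
Proof.
move=> gf a0 h y y0; have [ya|ay] := leP y a.
  apply: (@le_trans _ _ (- RI (fun z => `|f z|) y)).
    rewrite lerN2; apply: RI_mono; [exact: goodN|by rewrite y0 ya|].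
    by move=> *; exact: normr_ge0.
  rewrite lerNl; apply: le_trans (le_normr_Rintegral _ (good_int y gf)) => //.
  by rewrite -normrN ler_norm.
apply: (@le_trans _ _ (RI f a)).
  rewrite lerNl; apply: le_trans (le_normr_Rintegral _ (good_int a gf)) => //.
  by rewrite -normrN ler_norm.
apply: RI_mono => //; first by rewrite a0 ltW.
by move=> z /andP[az _]; apply: h; exact: ltW.
Qed.

Lemma RI_le f y K : good f -> 0 <= y -> (forall z, 0 <= z <= y -> f z <= K) ->
  RI f y <= K * y.
Proof.
move=> gf y0 h; apply: (@le_trans _ _ (Rintegral mu `[0, y] (fun _ => K))).
  apply: le_Rintegral.
  - by [].
  - exact: good_int.
  - exact: (good_int y (goodC K)).
  - by move=> z /=; rewrite in_itv /=; exact: h.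
rewrite Rintegral_cst //.
have := lebesgue_measure_itv `[0, y]; rewrite /= => ->; rewrite lte_fin; case: ltP => [yp|yn] /=.
- by rewrite subr0.
- by have -> : y = 0 by apply/eqP; rewrite eq_le yn y0.
Qed.


Lemma RI_gt0 f y : good f -> 0 < y -> (forall z, 0 <= z <= y -> 0 < f z) ->
  0 < RI f y.
Proof.
move=> gf y0 h; rewrite lt_neqAle RI_ge0; last by move=> z /h /ltW.
rewrite andbT; apply/negP => /eqP E.
have fi := good_int y gf.
have fin : (\int[mu]_(x in `[0%R, y]) (f x)%:E)%E \is a fin_num.
  by apply: (integrable_fin_num _ fi).
have E' : (\int[mu]_(x in `[0%R, y]) (f x)%:E = 0)%E.
  by rewrite -(fineK fin) /=; rewrite -[X in X%:E = _]/(RI f y) -E.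
have E2 : (\int[mu]_(x in `[0%R, y]) `|(f x)%:E| = 0)%E.
  rewrite -E'; apply: eq_integral => z; rewrite inE /= in_itv /= => hz.
  by rewrite ger0_norm // ltW // h.
move/integrableP: (fi) => [mf _].
have [|N [mN muN sN]] := (ae_eq_integral_abs mu _ mf).1 E2; first by [].
have : (mu `[0%R, y] <= mu N)%E.
  apply: le_measure; rewrite ?inE //.
  move=> z hz; apply: sN => /= /(_ hz) [] /eqP; rewrite gt_eqF //.
  by apply: h; move: hz; rewrite /= in_itv.
rewrite muN; have := lebesgue_measure_itv `[0, y]; rewrite /= => ->.
by rewrite lte_fin y0 oppr0 adde0 lee_fin leNgt y0.
Qed.


Lemma RI_lin3 f g h a b c y : good f -> good g -> good h ->
  RI (fun z => a * f z + b * g z + c * h z) y = a * RI f y + b * RI g y + c * RI h y.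
Proof.
move=> gf gg gh; rewrite /RI RintegralD //; last 2 first.
- exact: (good_int y (goodD (goodM (goodC a) gf) (goodM (goodC b) gg))).
- exact: (good_int y (goodM (goodC c) gh)).
rewrite RintegralD //; last 2 first.
- exact: (good_int y (goodM (goodC a) gf)).
- exact: (good_int y (goodM (goodC b) gg)).
by rewrite !RintegralZl //; apply: good_int.
Qed.

End Aux.

From mathcomp Require Import ring lra.
Arguments good {R}.
Arguments RI {R}.

Section Main.
Variable R : realType.
Variables u0 ub rho0 rhob : R -> R.
Hypothesis gu0 : good u0.
Hypothesis gub : good ub.
Hypothesis grho0 : good rho0.
Hypothesis grhob : good rhob.
Hypothesis ub_pos : forall z : R, 0 <= z -> 0 < ub z.
Hypothesis rho0_pos : forall z : R, 0 <= z -> 0 < rho0 z.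
Hypothesis rhob_pos : forall z : R, 0 <= z -> 0 < rhob z.
Variable Mu : R.
Hypothesis bu0 : forall z : R, 0 <= z -> `|u0 z| <= Mu.

Local Notation Fv := (Fyxt u0 rho0).
Local Notation Gv := (Gtxt ub rhob).
Local Notation Fm := (Fxt u0 rho0).
Local Notation Gm := (Gxt ub rhob).

Definition P y := RI rho0 y.
Definition U y := RI (fun z => u0 z * rho0 z) y.
Definition E y := RI (fun z => z * rho0 z) y.
Definition Q y := RI (fun z => rhob z * ub z) y.
Definition V y := RI (fun z => ub z * rhob z * ub z) y.
Definition W y := RI (fun z => z * (ub z * rhob z * ub z)) y.

Lemma Fdec y x s : Fv y x s = s * U y + E y - x * P y.
Proof.
rewrite (_ : s * U y + E y - x * P y = s * U y + 1 * E y + (- x) * P y); last by ring.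
have g1 : good (fun z => u0 z * rho0 z) := goodM gu0 grho0.
have g2 : good (fun z => z * rho0 z) := goodM (@goodid R) grho0.
rewrite /U /E /P -RI_lin3 //.
by rewrite /Fyxt /RI; apply: eq_Rintegral => z _; ring.
Qed.

Lemma Gdec y x s : Gv y x s = x * Q y - s * V y + W y.
Proof.
rewrite (_ : x * Q y - s * V y + W y = x * Q y + (- s) * V y + 1 * W y); last by ring.
have g1 : good (fun z => rhob z * ub z) := goodM grhob gub.
have g2 : good (fun z => ub z * rhob z * ub z) := goodM (goodM gub grhob) gub.
have g3 : good (fun z => z * (ub z * rhob z * ub z)) := goodM (@goodid R) g2.
rewrite /Q /V /W -RI_lin3 //.
by rewrite /Gtxt /RI; apply: eq_Rintegral => z _; ring.
Qed.


Lemma P_ge0 y : 0 <= P y.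
Proof. by apply: RI_ge0 => z /andP[z0 _]; apply: ltW; apply: rho0_pos. Qed.

Lemma P_gt0 y : 0 < y -> 0 < P y.
Proof. by move=> y0; apply: RI_gt0 => // z /andP[z0 _]; apply: rho0_pos. Qed.

Lemma E_ge0 y : 0 <= E y.
Proof.
apply: RI_ge0 => z /andP[z0 _]; apply: mulr_ge0 => //.
exact/ltW/rho0_pos.
Qed.

Lemma Q_ge0 y : 0 <= Q y.
Proof.
apply: RI_ge0 => z /andP[z0 _]; apply/ltW/mulr_gt0; [exact: rhob_pos|exact: ub_pos].
Qed.

Lemma Q_gt0 y : 0 < y -> 0 < Q y.
Proof.
move=> y0; apply: RI_gt0 => //; first exact: goodM.
by move=> z /andP[z0 _]; apply/mulr_gt0; [exact: rhob_pos|exact: ub_pos].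
Qed.

Lemma Q_mono a y : 0 <= a <= y -> Q a <= Q y.
Proof.
move=> hay; apply: RI_mono => //; first exact: goodM.
move=> z /andP[az _]; have z0 : 0 <= z by case/andP: hay => a0 _; lra.
by apply/ltW/mulr_gt0; [exact: rhob_pos|exact: ub_pos].
Qed.

Lemma W_ge0 y : 0 <= W y.
Proof.
apply: RI_ge0 => z /andP[z0 _]; apply: mulr_ge0 => //.
by apply/ltW/mulr_gt0; [apply/mulr_gt0|]; [exact: ub_pos|exact: rhob_pos|exact: ub_pos].
Qed.

Lemma V_le : exists K, 0 < K /\ forall y, 0 <= y <= 1 -> V y <= K * y.
Proof.
have g2 : good (fun z => ub z * rhob z * ub z) := goodM (goodM gub grhob) gub.
have [K hK] := g2.2 1; exists (`|K| + 1); split; first by rewrite ltr_pwDr // normr_ge0.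
move=> y /andP[y0 y1]; apply: RI_le => //.
move=> z /andP[z0 zy]; apply: le_trans (ler_norm _) _.
apply: le_trans (hK z _) _; first by rewrite z0 /=; lra.
apply: le_trans (ler_norm K) _; lra.
Qed.

Lemma F0 x s : Fv 0 x s = 0.
Proof. exact: RI0. Qed.

Lemma G0 x s : Gv 0 x s = 0.
Proof. exact: RI0. Qed.

Lemma Flow x s : 0 <= s -> exists B, forall y, 0 <= y -> B <= Fv y x s.
Proof.
move=> s0; set a := `|x| + s * `|Mu|.
have a0 : 0 <= a by rewrite addr_ge0 // mulr_ge0.
have gf : good (fun eta => (s * u0 eta + eta - x) * rho0 eta).
  apply: goodM => //; apply: goodB; last exact: goodC.
  by apply: goodD; [apply: goodM; [exact: goodC | exact: gu0] | exact: goodid].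
exists (- RI (fun z => `|(s * u0 z + z - x) * rho0 z|) a) => y y0.
apply: (@RI_lb R _ a gf a0 _ y y0) => z az; have z0 : 0 <= z by lra.
apply: mulr_ge0; last exact/ltW/rho0_pos.
have h1 : - `|Mu| <= u0 z.
  have := ler_norm (- u0 z); rewrite normrN => h2.
  have := bu0 z z0; have := ler_norm Mu; lra.
have : - (s * `|Mu|) <= s * u0 z by rewrite -mulrN ler_wpM2l.
have := ler_norm x; rewrite /a in az; lra.
Qed.

Lemma Glow x s : 0 <= x -> 0 <= s -> exists B, forall y, 0 <= y -> B <= Gv y x s.
Proof.
move=> x0 s0.
have gf : good (fun eta => (x - ub eta * (s - eta)) * rhob eta * ub eta).
  apply: goodM => //; apply: goodM => //; apply: goodB; first exact: goodC.
  by apply: goodM => //; apply: goodB; [exact: goodC|exact: goodid].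
exists (- RI (fun z => `|(x - ub z * (s - z)) * rhob z * ub z|) s) => y y0.
apply: (@RI_lb R _ s gf s0 _ y y0) => z sz; have z0 : 0 <= z by lra.
apply: mulr_ge0; last exact/ltW/ub_pos.
apply: mulr_ge0; last exact/ltW/rhob_pos.
have : ub z * (s - z) <= 0.
  by rewrite mulr_ge0_le0 //; [exact/ltW/ub_pos | lra].
lra.
Qed.


Lemma Fm_le x s y : 0 <= s -> 0 <= y -> Fm x s <= Fv y x s.
Proof.
move=> s0 y0; have [B hB] := Flow x s s0.
apply: ge_inf; last by exists y.
by exists B => _ [z z0 <-]; apply: hB.
Qed.

Lemma Fm_ge x s c : (forall y, 0 <= y -> c <= Fv y x s) -> c <= Fm x s.
Proof.
move=> h; apply: lb_le_inf; first by exists (Fv 0 x s); exists 0 => //; rewrite /halfline /=.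
by move=> _ [z z0 <-]; apply: h.
Qed.

Lemma Fm_lt x s c : Fm x s < c -> exists2 y, 0 <= y & Fv y x s < c.
Proof.
move=> /inf_lt []; first by exists (Fv 0 x s); exists 0 => //; rewrite /halfline /=.
by move=> _ [y y0 <-] h; exists y.
Qed.

Lemma Gm_le x s y : 0 <= x -> 0 <= s -> 0 <= y -> Gm x s <= Gv y x s.
Proof.
move=> x0 s0 y0; have [B hB] := Glow x s x0 s0.
apply: ge_inf; last by exists y.
by exists B => _ [z z0 <-]; apply: hB.
Qed.

Lemma Gm_ge x s c : (forall y, 0 <= y -> c <= Gv y x s) -> c <= Gm x s.
Proof.
move=> h; apply: lb_le_inf; first by exists (Gv 0 x s); exists 0 => //; rewrite /halfline /=.
by move=> _ [z z0 <-]; apply: h.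
Qed.

Lemma Gm_lt x s c : Gm x s < c -> exists2 y, 0 <= y & Gv y x s < c.
Proof.
move=> /inf_lt []; first by exists (Gv 0 x s); exists 0 => //; rewrite /halfline /=.
by move=> _ [y y0 <-] h; exists y.
Qed.

Lemma Fm_le0 x s : 0 <= s -> Fm x s <= 0.
Proof. by move=> s0; rewrite -(F0 x s); apply: Fm_le. Qed.

Lemma Gm_le0 x s : 0 <= x -> 0 <= s -> Gm x s <= 0.
Proof. by move=> x0 s0; rewrite -(G0 x s); apply: Gm_le. Qed.

Lemma Fm_mono x x' s : 0 <= s -> x <= x' -> Fm x' s <= Fm x s.
Proof.
move=> s0 xx; apply: Fm_ge => y y0; apply: le_trans (Fm_le x' s y s0 y0) _.
rewrite !Fdec; have := P_ge0 y => hP.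
have : x * P y <= x' * P y by rewrite ler_wpM2r.
lra.
Qed.

Lemma Gm_mono x x' s : 0 <= x -> 0 <= s -> x <= x' -> Gm x s <= Gm x' s.
Proof.
move=> x0 s0 xx; apply: Gm_ge => y y0; apply: le_trans (Gm_le x s y x0 s0 y0) _.
rewrite !Gdec; have := Q_ge0 y => hQ.
have : x * Q y <= x' * Q y by rewrite ler_wpM2r.
lra.
Qed.


Lemma scaleF lam y x s : 0 <= lam <= 1 -> lam * Fv y x s <= Fv y (lam * x) (lam * s).
Proof.
move=> /andP[l0 l1]; rewrite !Fdec.
rewrite (_ : lam * s * U y + E y - lam * x * P y = lam * (s * U y + E y - x * P y) + (1 - lam) * E y); last by ring.
by rewrite lerDl mulr_ge0 ?E_ge0 // subr_ge0.
Qed.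

Lemma scaleG lam y x s : 0 <= lam <= 1 -> lam * Gv y x s <= Gv y (lam * x) (lam * s).
Proof.
move=> /andP[l0 l1]; rewrite !Gdec.
rewrite (_ : lam * x * Q y - lam * s * V y + W y = lam * (x * Q y - s * V y + W y) + (1 - lam) * W y); last by ring.
by rewrite lerDl mulr_ge0 ?W_ge0 // subr_ge0.
Qed.

Lemma part1 t l r : 0 < t -> l < r ->
  Iset u0 rho0 ub rhob t = `[l, r]%classic ->
  forall x, l <= x <= r -> Fm x t = 0 /\ Gm x t = 0.
Proof.
move=> t0 lr It.
have hI : forall x, l <= x <= r -> 0 <= x /\ Fm x t = Gm x t.
  by move=> x hx; have : Iset u0 rho0 ub rhob t x by rewrite It /= in_itv /= hx.
have lI : l <= l <= r by rewrite lexx ltW.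
have rI : l <= r <= r by rewrite lexx ltW.
have [l0 _] := hI l lI.
have t0' : 0 <= t := ltW t0.
have hc : forall x, l <= x <= r -> Gm x t = Gm l t /\ Fm x t = Gm l t.
  move=> x hx; have [x0 ex] := hI x hx; have [_ el] := hI l lI.
  have h1 := Gm_mono l x t l0 t0' (proj1 (andP hx)).
  have h2 := Fm_mono l x t t0' (proj1 (andP hx)).
  suff : Gm x t = Gm l t by move=> e; split => //; rewrite ex.
  apply/eqP; rewrite eq_le h1 andbT; rewrite -ex; apply: le_trans h2 _.
  by rewrite el.
suff c0 : Gm l t = 0.
  by move=> x hx; have [e1 e2] := hc x hx; rewrite e1 e2 c0.
apply/eqP; rewrite eq_le Gm_le0 //=; rewrite leNgt; apply/negP => cneg.
set c := Gm l t in cneg hc *.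
have [K [K0 hV]] := V_le.
set d := Num.min 1 (- c / (2 * t * K)).
have d0 : 0 < d by rewrite lt_min ltr01 /= divr_gt0 // ?oppr_gt0 // !mulr_gt0.
have d1 : d <= 1 by rewrite ge_min lexx.
have dK : t * K * d <= - c / 2.
  have : d <= - c / (2 * t * K) by rewrite ge_min lexx orbT.
  rewrite ler_pdivlMr ?mulr_gt0 // => h.
  rewrite ler_pdivlMr //; move: h; rewrite (_ : d * (2 * t * K) = t * K * d * 2) //.
  by ring.
have Qd := Q_gt0 d d0.
set eta := Num.min (- c / 2) ((r - l) * Q d).
have eta0 : 0 < eta by rewrite lt_min divr_gt0 ?oppr_gt0 //= mulr_gt0 // subr_gt0.
have eta1 : eta <= - c / 2 by rewrite ge_min lexx.
have eta2 : eta <= (r - l) * Q d by rewrite ge_min lexx orbT.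
have [r0 er] := hc r rI.
have cl : Gm r t < c + eta by rewrite r0 ltrDl.
have [tau tau0 htau] := Gm_lt r t (c + eta) cl.
have dtau : d < tau.
  rewrite ltNge; apply/negP => taud.
  have td : 0 <= tau <= 1 by rewrite tau0 (le_trans taud d1).
  have := hV tau td.
  have := Q_ge0 tau; have := W_ge0 tau; move: htau; rewrite Gdec => htau hW hQ hVt.
  have : t * V tau <= t * (K * tau) by rewrite ler_wpM2l.
  have : K * tau <= K * d by rewrite ler_wpM2l // ltW.
  have : 0 <= r * Q tau by apply: mulr_ge0 => //; lra.
  move=> h1 h2 h3.
  have : t * (K * tau) <= t * (K * d) by rewrite ler_wpM2l.
  rewrite (_ : t * (K * d) = t * K * d); last by ring.
  lra.
have dt : 0 <= d <= tau by rewrite !ltW.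
have Qm := Q_mono d tau dt.
have el : Gv tau l t = Gv tau r t - (r - l) * Q tau by rewrite !Gdec; ring.
have := Gm_le l t tau l0 t0' tau0; rewrite -/c el.
have : (r - l) * Q d <= (r - l) * Q tau by rewrite ler_wpM2l // subr_ge0 ltW.
lra.
Qed.


Lemma inf_0 (A : set R) : A 0 -> (forall z, A z -> 0 <= z) -> inf A = 0.
Proof.
move=> A0 Ap; apply/eqP; rewrite eq_le; apply/andP; split.
  by apply: ge_inf => //; exists 0 => z /Ap.
by apply: lb_le_inf; [exists 0 | move=> z /Ap].
Qed.

Lemma part2 t l r : 0 < t -> l < r ->
  Iset u0 rho0 ub rhob t = `[l, r]%classic ->
  (forall x, l < x <= r ->
     tau_low ub rhob x t = 0 /\ tau_up ub rhob x t = 0)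
  /\ tau_low ub rhob l t = 0.
Proof.
move=> t0 lr It; have h1 := @part1 t l r t0 lr It.
have lI : l <= l <= r by rewrite lexx ltW.
have hl : 0 <= l.
  have : Iset u0 rho0 ub rhob t l by rewrite It /= in_itv /= lI.
  by case.
have t0' : 0 <= t := ltW t0.
split; last first.
  apply: inf_0; last by move=> z [].
  by split => //; rewrite G0 (proj2 (h1 l lI)).
move=> x /andP[lx xr]; have xI : l <= x <= r by rewrite ltW.
suff e : Gargmin ub rhob x t = [set 0] by rewrite /tau_low /tau_up e inf1 sup1.
apply/seteqP; split => tau /=.
  move=> [tau0 htau]; apply/eqP; rewrite eq_le tau0 andbT leNgt; apply/negP => taup.
  have := Q_gt0 tau taup => hQ.
  have el : Gv tau l t = Gv tau x t - (x - l) * Q tau by rewrite !Gdec; ring.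
  have := Gm_le l t tau hl t0' tau0; rewrite el htau (proj2 (h1 x xI)) (proj2 (h1 l lI)).
  have : 0 < (x - l) * Q tau by rewrite mulr_gt0 // subr_gt0.
  lra.
by move=> ->; split => //; rewrite G0 (proj2 (h1 x xI)).
Qed.

Lemma part3 t l r : 0 < t -> l < r ->
  Iset u0 rho0 ub rhob t = `[l, r]%classic ->
  (forall x, l <= x < r ->
     y_low u0 rho0 x t = 0 /\ y_up u0 rho0 x t = 0)
  /\ y_low u0 rho0 r t = 0.
Proof.
move=> t0 lr It; have h1 := @part1 t l r t0 lr It.
have rI : l <= r <= r by rewrite lexx ltW.
have t0' : 0 <= t := ltW t0.
split; last first.
  apply: inf_0; last by move=> z [].
  by split => //; rewrite F0 (proj1 (h1 r rI)).
move=> x /andP[lx xr]; have xI : l <= x <= r by rewrite lx ltW.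
suff e : Fargmin u0 rho0 x t = [set 0] by rewrite /y_low /y_up e inf1 sup1.
apply/seteqP; split => y /=.
  move=> [y0 hy]; apply/eqP; rewrite eq_le y0 andbT leNgt; apply/negP => yp.
  have := P_gt0 y yp => hP.
  have el : Fv y r t = Fv y x t - (r - x) * P y by rewrite !Fdec; ring.
  have := Fm_le r t y t0' y0; rewrite el hy (proj1 (h1 x xI)) (proj1 (h1 r rI)).
  have : 0 < (r - x) * P y by rewrite mulr_gt0 // subr_gt0.
  lra.
by move=> ->; split => //; rewrite F0 (proj1 (h1 x xI)).
Qed.


Lemma keyI t l r : 0 < t -> l < r ->
  Iset u0 rho0 ub rhob t = `[l, r]%classic ->
  forall s x, 0 <= s <= t -> Iset u0 rho0 ub rhob s x ->
  (forall y, 0 <= y -> 0 <= Fv y x s) /\ (forall y, 0 <= y -> 0 <= Gv y x s).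
Proof.
move=> t0 lr It s x /andP[s0 st] [x0 ex]; have h1 := @part1 t l r t0 lr It.
have lI : l <= l <= r by rewrite lexx ltW.
have rI : l <= r <= r by rewrite lexx ltW.
have hl : 0 <= l.
  have : Iset u0 rho0 ub rhob t l by rewrite It /= in_itv /= lI.
  by case.
have t0' : 0 <= t := ltW t0.
have Fr : forall y, 0 <= y -> 0 <= Fv y r t.
  by move=> y y0; rewrite -(proj1 (h1 r rI)); apply: Fm_le.
have Gl : forall y, 0 <= y -> 0 <= Gv y l t.
  by move=> y y0; rewrite -(proj2 (h1 l lI)); apply: Gm_le.
set lam := s / t.
have lam0 : 0 <= lam by rewrite divr_ge0.
have lam1 : 0 <= lam <= 1 by rewrite lam0 ler_pdivrMr // mul1r.
have es : s = lam * t by rewrite /lam divfK // gt_eqF.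
have FS : forall y, 0 <= y -> 0 <= Fv y (lam * r) s.
  move=> y y0; rewrite [in Fv y _ s]es; apply: le_trans (scaleF lam y r t lam1).
  by rewrite mulr_ge0 // Fr.
have GS : forall y, 0 <= y -> 0 <= Gv y (lam * l) s.
  move=> y y0; rewrite [in Gv y _ s]es; apply: le_trans (scaleG lam y l t lam1).
  by rewrite mulr_ge0 // Gl.
have [xr|rx] := leP x (lam * r).
  have Fy : forall y, 0 <= y -> 0 <= Fv y x s.
    move=> y y0; apply: le_trans (FS y y0) _; rewrite !Fdec.
    have : x * P y <= lam * r * P y by rewrite ler_wpM2r // P_ge0.
    lra.
  split => // y y0.
  have Fz : Fm x s = 0.
    by apply/eqP; rewrite eq_le Fm_le0 //= Fm_ge.
  by rewrite -Fz ex; apply: Gm_le.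
have Gy : forall y, 0 <= y -> 0 <= Gv y x s.
  move=> y y0; apply: le_trans (GS y y0) _; rewrite !Gdec.
  have : lam * l <= x.
    apply: le_trans (ltW rx); rewrite ler_wpM2l // ltW //.
  move=> hx; have : lam * l * Q y <= x * Q y by rewrite ler_wpM2r // Q_ge0.
  lra.
split => // y y0.
have Gz : Gm x s = 0.
  by apply/eqP; rewrite eq_le Gm_le0 //= Gm_ge.
by rewrite -Gz -ex; apply: Fm_le.
Qed.

Lemma part5 t l r : 0 < t -> l < r ->
  Iset u0 rho0 ub rhob t = `[l, r]%classic ->
  forall (x s lam : R), 0 <= s <= t -> Iset u0 rho0 ub rhob s x ->
         0 <= lam <= 1 ->
         0 <= lam * s <= t /\ Iset u0 rho0 ub rhob (lam * s) (lam * x).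
Proof.
move=> t0 lr It x s lam hs hx hlam.
have [Fy Gy] := @keyI t l r t0 lr It s x hs hx.
have [s0 st] := andP hs; have [l0 l1] := andP hlam; have [x0 _] := hx.
have ls0 : 0 <= lam * s by rewrite mulr_ge0.
have lx0 : 0 <= lam * x by rewrite mulr_ge0.
split.
  rewrite ls0 /=; apply: le_trans st; rewrite ler_piMl //.
split => //.
have -> : Fm (lam * x) (lam * s) = 0.
  apply/eqP; rewrite eq_le Fm_le0 //= Fm_ge // => y y0.
  by apply: le_trans (scaleF lam y x s hlam); rewrite mulr_ge0 // Fy.
apply/esym/eqP; rewrite eq_le Gm_le0 //= Gm_ge // => y y0.
by apply: le_trans (scaleG lam y x s hlam); rewrite mulr_ge0 // Gy.
Qed.

End Main.

Unset Implicit Arguments.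

Theorem lemma2p7 (R : realType) (u0 ub rho0 rhob : R -> R)
  (mu0 : measurable_fun (@halfline R) u0)
  (mub : measurable_fun (@halfline R) ub)
  (mrho0 : measurable_fun (@halfline R) rho0)
  (mrhob : measurable_fun (@halfline R) rhob)
  (bu0 : exists M : R, forall z : R, 0 <= z -> `|u0 z| <= M)
  (bub : exists M : R, forall z : R, 0 <= z -> `|ub z| <= M)
  (ub_pos : forall z : R, 0 <= z -> 0 < ub z)
  (rho0_pos : forall z : R, 0 <= z -> 0 < rho0 z)
  (rhob_pos : forall z : R, 0 <= z -> 0 < rhob z)
  (lb_rho0 : forall c : R, exists M : R, forall z : R, 0 <= z <= c -> rho0 z <= M)
  (lb_rhob : forall c : R, exists M : R, forall z : R, 0 <= z <= c -> rhob z <= M)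
  (t l r : R) (t_pos : 0 < t) (lr : l < r)
  (It : Iset u0 rho0 ub rhob t = `[l, r]%classic) :
  [/\ (forall x, l <= x <= r ->
         Fxt u0 rho0 x t = 0 /\ Gxt ub rhob x t = 0),
      (forall x, l < x <= r ->
         tau_low ub rhob x t = 0 /\ tau_up ub rhob x t = 0)
      /\ tau_low ub rhob l t = 0,
      (forall x, l <= x < r ->
         y_low u0 rho0 x t = 0 /\ y_up u0 rho0 x t = 0)
      /\ y_low u0 rho0 r t = 0,
      (forall t', 0 < t' < t ->
         (Iset u0 rho0 ub rhob t')° !=set0) &
      (forall (x s lam : R), 0 <= s <= t -> Iset u0 rho0 ub rhob s x ->
         0 <= lam <= 1 ->
         0 <= lam * s <= t /\ Iset u0 rho0 ub rhob (lam * s) (lam * x))].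
Proof.
have gu0 : good u0.
  split => //; have [M hM] := bu0; exists M => z /andP[z0 _]; exact: hM.
have gub : good ub.
  split => //; have [M hM] := bub; exists M => z /andP[z0 _]; exact: hM.
have grho0 : good rho0.
  split => // c; have [M hM] := lb_rho0 c; exists M => z hz.
  by rewrite gtr0_norm; [exact: hM | apply: rho0_pos; case/andP: hz].
have grhob : good rhob.
  split => // c; have [M hM] := lb_rhob c; exists M => z hz.
  by rewrite gtr0_norm; [exact: hM | apply: rhob_pos; case/andP: hz].
have [Mu hMu] := bu0.
have P1 := @part1 R u0 ub rho0 rhob gu0 gub grho0 grhob ub_pos rho0_pos rhob_pos Mu hMu t l r t_pos lr It.
have P2 := @part2 R u0 ub rho0 rhob gu0 gub grho0 grhob ub_pos rho0_pos rhob_pos Mu hMu t l r t_pos lr It.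
have P3 := @part3 R u0 ub rho0 rhob gu0 gub grho0 grhob ub_pos rho0_pos rhob_pos Mu hMu t l r t_pos lr It.
have P5 := @part5 R u0 ub rho0 rhob gu0 gub grho0 grhob ub_pos rho0_pos rhob_pos Mu hMu t l r t_pos lr It.
split => //.
move=> t' /andP[t'0 t't].
set lam := t' / t.
have lam0 : 0 < lam by rewrite divr_gt0.
have lam1 : 0 <= lam <= 1 by rewrite ltW //= ler_pdivrMr // mul1r ltW.
have et : lam * t = t' by rewrite /lam divfK // gt_eqF.
have sub : `[lam * l, lam * r]%classic `<=` Iset u0 rho0 ub rhob t'.
  move=> z /=; rewrite in_itv /= => /andP[hz1 hz2].
  have ez : lam * (z / lam) = z by rewrite mulrC divfK // gt_eqF.
  have xI : Iset u0 rho0 ub rhob t (z / lam).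
    rewrite It /= in_itv /=; apply/andP; split.
      by rewrite ler_pdivlMr // mulrC.
    by rewrite ler_pdivrMr // mulrC.
  have ht : 0 <= t <= t by rewrite lexx ltW.
  by have [_] := P5 (z / lam) t lam ht xI lam1; rewrite et ez.
exists (lam * ((l + r) / 2)).
apply: (interiorS sub); rewrite interior_itv_bnd /= in_itv /=.
apply/andP; split; rewrite ltr_pM2l //; lra.
Qed.
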